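(* Let $(M,g)$ be a two-dimensional Riemannian manifold and $\xi$ a conformal Killing vector of $g$. Let $D$ be a real, symmetric, 2-covariant tensor which is transverse and traceless with respect to $g$ and satisfies the KID equation $\pounds_\xi D=0$. Then $D$ is a linear combination with constant coefficients of $$D_\xi:=\frac{1}{|\xi|_g^4}\Big(\boldsymbol{\xi}\otimes\boldsymbol{\xi}-\tfrac12|\xi|_g^2\,g\Big),\qquad D_{\xi,\xi^\perp}:=\frac{1}{2|\xi|_g^2|\xi^\perp|_g^2}\Big(\boldsymbol{\xi}\otimes\boldsymbol{\xi^\perp}+\boldsymbol{\xi^\perp}\otimes\boldsymbol{\xi}\Big),$$ where $\boldsymbol{\xi}:=g(\xi,\cdot)$ and $\boldsymbol{\xi^\perp}:=g(\xi^\perp,\cdot)$.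
   Context: Transverse and traceless means $\nabla_\alpha D^{\alpha\beta}=0$ and $D^\alpha{}_\alpha=0$, with indices raised by $g$ and $\nabla$ its Levi-Civita connection. In dimension $n$ the KID equation is $\pounds_\xi D+\frac{n-2}{n}(\mathrm{div}_g\xi)D=0$, which for $n=2$ reduces to $\pounds_\xi D=0$. $|\xi|_g^2=g(\xi,\xi)$. The vector field $\xi^\perp$ is a conformal Killing vector of $g$ which is everywhere orthogonal to $\xi$ and has the same norm as $\xi$ at every point (it is unique up to a global sign; in local coordinates $z$ with $g$ conformal to $4\,dz\,d\bar z$ and $\xi=f\partial_z+\bar f\partial_{\bar z}$, it is $\xi^\perp=i(f\partial_z-\bar f\partial_{\bar z})$). The tensors $D_\xi, D_{\xi,\xi^\perp}$ are defined where $\xi\neq0$; the result is local. *)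

(* Defs.v *)
(* concrete reals R with Coquelicot derivatives/continuity.
   The (local) statement is formulated in a coordinate chart: an open set U of R^2
   with a Riemannian metric given by its components g_ij. *)
From Stdlib Require Import Reals List.
From Coquelicot Require Import Coquelicot.
Open Scope R_scope.

Definition pt := (R * R)%type.

(* Coordinate indices: false = x^1, true = x^2. *)
Definition sum2 (f : bool -> R) : R := f false + f true.

Definition pd (i : bool) (f : pt -> R) : pt -> R :=
  fun p => if i then Derive (fun t => f (fst p, t)) (snd p)
           else Derive (fun t => f (t, snd p)) (fst p).

Fixpoint ipd (l : list bool) (f : pt -> R) : pt -> R :=
  match l with nil => f | i :: l' => pd i (ipd l' f) end.

Definition smooth_on (U : pt -> Prop) (f : pt -> R) : Prop :=
  forall (l : list bool) (p : pt), U p ->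
    continuous (ipd l f) p /\
    ex_derive (fun t => ipd l f (t, snd p)) (fst p) /\
    ex_derive (fun t => ipd l f (fst p, t)) (snd p).

Definition open_pt (U : pt -> Prop) : Prop := open U.

Definition vfield := bool -> pt -> R.
Definition cov2 := bool -> bool -> pt -> R.

Definition riemannian_on (U : pt -> Prop) (g : cov2) : Prop :=
  (forall i j, smooth_on U (g i j)) /\
  (forall i j p, U p -> g i j p = g j i p) /\
  (forall p (v : bool -> R), U p -> (v false <> 0 \/ v true <> 0) ->
     0 < sum2 (fun i => sum2 (fun j => g i j p * v i * v j))).

Definition gdet (g : cov2) (p : pt) : R :=
  g false false p * g true true p - g false true p * g true false p.

Definition ginv (g : cov2) (i j : bool) (p : pt) : R :=
  (if Bool.eqb i j then g (negb i) (negb j) p else - g i j p) / gdet g p.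

Definition chr (g : cov2) (k i j : bool) (p : pt) : R :=
  / 2 * sum2 (fun l => ginv g k l p *
      (pd i (g l j) p + pd j (g l i) p - pd l (g i j) p)).

Definition raise2 (g : cov2) (D : cov2) (a b : bool) (p : pt) : R :=
  sum2 (fun c => sum2 (fun d => ginv g a c p * ginv g b d p * D c d p)).

Definition divD (g : cov2) (D : cov2) (b : bool) (p : pt) : R :=
  sum2 (fun a => pd a (raise2 g D a b) p +
     sum2 (fun l => chr g a a l p * raise2 g D l b p
                  + chr g b a l p * raise2 g D a l p)).

Definition trD (g : cov2) (D : cov2) (p : pt) : R :=
  sum2 (fun a => sum2 (fun b => ginv g a b p * D a b p)).

Definition transverse_traceless_on (U : pt -> Prop) (g D : cov2) : Prop :=
  forall p, U p -> (forall b, divD g D b p = 0) /\ trD g D p = 0.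

Definition lie2 (xi : vfield) (T : cov2) (i j : bool) (p : pt) : R :=
  sum2 (fun k => xi k p * pd k (T i j) p
               + T k j p * pd i (xi k) p + T i k p * pd j (xi k) p).

Definition conformal_killing_on (U : pt -> Prop) (g : cov2) (xi : vfield) : Prop :=
  (forall i, smooth_on U (xi i)) /\
  exists phi : pt -> R, forall p, U p -> forall i j,
    lie2 xi g i j p = phi p * g i j p.

Definition gdot (g : cov2) (u v : vfield) (p : pt) : R :=
  sum2 (fun i => sum2 (fun j => g i j p * u i p * v j p)).

Definition gnorm2 (g : cov2) (u : vfield) (p : pt) : R := gdot g u u p.

Definition flat (g : cov2) (u : vfield) (i : bool) (p : pt) : R :=
  sum2 (fun j => g i j p * u j p).

Definition D_xi (g : cov2) (xi : vfield) (i j : bool) (p : pt) : R :=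
  / (gnorm2 g xi p ^ 2) *
  (flat g xi i p * flat g xi j p - / 2 * gnorm2 g xi p * g i j p).

Definition D_xi_xiperp (g : cov2) (xi xp : vfield) (i j : bool) (p : pt) : R :=
  / (2 * gnorm2 g xi p * gnorm2 g xp p) *
  (flat g xi i p * flat g xp j p + flat g xp i p * flat g xi j p).

(* Main.v *)
Require Import Defs.
From Stdlib Require Import Reals Lra Psatz FunctionalExtensionality.
From Coquelicot Require Import Coquelicot.
Open Scope R_scope.

Definition detJ (G: bool->bool->R) := G false false * G true true - G false true * G true false.
Definition hinv G (i j : bool) := (if Bool.eqb i j then G (negb i) (negb j) else - G i j) / detJ G.
Definition Gam G (dG : bool -> bool -> bool -> R) k i j := /2 * sum2 (fun l => hinv G k l * (dG i l j + dG j l i - dG l i j)).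
Definition nabD G dG (DD : bool -> bool -> R) (dDD : bool -> bool -> bool -> R) a i j := dDD a i j - sum2 (fun l => Gam G dG l a i * DD l j) - sum2 (fun l => Gam G dG l a j * DD i l).
Definition dhinv G (dG : bool -> bool -> bool -> R) k i j := - sum2 (fun a => sum2 (fun b => hinv G i a * dG k a b * hinv G b j)).
Definition R2 G (DD : bool -> bool -> R) a b := sum2 (fun c => sum2 (fun d => hinv G a c * hinv G b d * DD c d)).
Definition dR2 G dG DD (dDD : bool -> bool -> bool -> R) k a b := sum2 (fun c => sum2 (fun d => dhinv G dG k a c * hinv G b d * DD c d + hinv G a c * dhinv G dG k b d * DD c d + hinv G a c * hinv G b d * dDD k c d)).
Definition divJ G dG DD dDD b := sum2 (fun a => dR2 G dG DD dDD a a b + sum2 (fun l => Gam G dG a a l * R2 G DD l b + Gam G dG b a l * R2 G DD a l)).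

Definition bil (T : bool -> bool -> R) (X Y : bool -> R) := sum2 (fun i => sum2 (fun j => T i j * X i * Y j)).
Definition dbil (T : bool -> bool -> R) (dT : bool -> bool -> bool -> R) (X : bool -> R) (dX : bool -> bool -> R) (Y : bool -> R) (dY : bool -> bool -> R) (k : bool) :=
  sum2 (fun i => sum2 (fun j => dT k i j * X i * Y j + T i j * dX k i * Y j + T i j * X i * dY k j)).
Definition dir (X : bool -> R) (f : bool -> R) := sum2 (fun k => X k * f k).
Definition brk (X : bool -> R) (dX : bool -> bool -> R) (Y : bool -> R) (dY : bool -> bool -> R) (i : bool) :=
  sum2 (fun k => X k * dY k i - Y k * dX k i).
Definition lieJ (X : bool -> R) (dX : bool -> bool -> R) (T : bool -> bool -> R) (dT : bool -> bool -> bool -> R) i j :=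
  sum2 (fun k => X k * dT k i j + T k j * dX i k + T i k * dX j k).
Definition cov G dG (X Y : bool -> R) (dY : bool -> bool -> R) (i : bool) :=
  sum2 (fun k => X k * dY k i) + sum2 (fun k => sum2 (fun l => Gam G dG i k l * X k * Y l)).
Definition NABX G dG DD dDD (X Z Y : bool -> R) :=
  sum2 (fun a => sum2 (fun i => sum2 (fun j => X a * Z i * Y j * nabD G dG DD dDD a i j))).

Lemma L1 X dX Y dY Z dZ T dT :
  dir X (dbil T dT Y dY Z dZ) = bil (lieJ X dX T dT) Y Z + bil T (brk X dX Y dY) Z + bil T Y (brk X dX Z dZ).
Proof. unfold dir, dbil, bil, lieJ, brk, sum2; ring. Qed.

Lemma metric_compat G dG X Y dY Z dZ :
  G true false = G false true ->
  (forall k, dG k true false = dG k false true) ->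
  detJ G <> 0 ->
  dir X (dbil G dG Y dY Z dZ) = bil G (cov G dG X Y dY) Z + bil G Y (cov G dG X Z dZ).
Proof.
  intros HG HdG Hdet. unfold detJ in Hdet. rewrite HG in Hdet.
  unfold dir, dbil, bil, cov, Gam, hinv, detJ, sum2; simpl; rewrite ?HG, ?HdG; field; exact Hdet.
Qed.

Lemma div_contract G dG DD dDD Y :
  G true false = G false true ->
  (forall k, dG k true false = dG k false true) ->
  DD true false = DD false true ->
  (forall k, dDD k true false = dDD k false true) ->
  detJ G <> 0 ->
  bil G (divJ G dG DD dDD) Y = sum2 (fun a => sum2 (fun i => hinv G a i * sum2 (fun j => nabD G dG DD dDD a i j * Y j))).
Proof.
  intros HG HdG HD HdD Hdet.
  unfold detJ in Hdet. rewrite HG in Hdet.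
  unfold bil, divJ, dR2, R2, nabD, dhinv, Gam, hinv, detJ, sum2; simpl;
  rewrite ?HG, ?HdG, ?HD, ?HdD; field; exact Hdet.
Qed.

Lemma NABX_eq G dG DD dDD X dX Y dY :
  NABX G dG DD dDD X X Y = dir X (dbil DD dDD X dX Y dY) - bil DD (cov G dG X X dX) Y - bil DD X (cov G dG X Y dY).
Proof. unfold NABX, nabD, dir, dbil, bil, cov, sum2. ring. Qed.

Lemma Gam_sym G dG k :
  (forall k, dG k true false = dG k false true) -> Gam G dG k true false = Gam G dG k false true.
Proof. intros HdG. unfold Gam, sum2. rewrite !HdG. ring. Qed.

Lemma torsion G dG X dX Y dY i :
  (forall k, dG k true false = dG k false true) ->
  cov G dG X Y dY i - cov G dG Y X dX i = brk X dX Y dY i.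
Proof. intros HdG. unfold cov, brk, sum2. rewrite !(Gam_sym G dG i HdG). ring. Qed.

Definition mdet (u v : bool -> R) := u false * v true - u true * v false.

Lemma gram G u v : bil G u u * bil G v v - bil G u v * bil G v u = detJ G * (mdet u v)^2.
Proof. unfold bil, detJ, mdet, sum2. ring. Qed.

Lemma bil_sym G X Y : G true false = G false true -> bil G X Y = bil G Y X.
Proof. intros HG. unfold bil, sum2. rewrite HG. ring. Qed.

Lemma frame0 u v (c : bool -> R) : mdet u v <> 0 ->
  sum2 (fun i => c i * u i) = 0 -> sum2 (fun i => c i * v i) = 0 -> forall i, c i = 0.
Proof.
  unfold mdet, sum2. intros Hm H1 H2 i.
  apply (Rmult_eq_reg_r (u false * v true - u true * v false)); [|exact Hm].
  destruct i.
  - transitivity (u false * (c false * v false + c true * v true) - v false * (c false * u false + c true * u true)); [ring|].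
    rewrite H1, H2; ring.
  - transitivity (v true * (c false * u false + c true * u true) - u true * (c false * v false + c true * v true)); [ring|].
    rewrite H1, H2; ring.
Qed.

Lemma lin2 a b g00 g01 g10 g11 r s :
  a*g00 + b*g10 = r -> a*g01 + b*g11 = s -> g00*g11 - g01*g10 <> 0 ->
  a = (r*g11 - s*g10)/(g00*g11 - g01*g10) /\ b = (s*g00 - r*g01)/(g00*g11 - g01*g10).
Proof. intros H1 H2 H. subst r s. split; field; exact H. Qed.

Section Frame.
Variables (G : bool -> bool -> R) (u v : bool -> R).
Hypothesis HG : G true false = G false true.
Hypothesis Horth : bil G u v = 0.
Hypothesis Hnorm : bil G v v = bil G u u.
Hypothesis HN : bil G u u <> 0.

Lemma frame_m : mdet u v <> 0.
Proof.
  intro Hm. pose proof (gram G u v) as E. rewrite Hm, Hnorm, Horth, (bil_sym G v u HG), Horth in E.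
  apply HN. nra.
Qed.

Lemma frame_det : detJ G <> 0.
Proof.
  intro Hd. pose proof (gram G u v) as E. rewrite Hd, Hnorm, Horth, (bil_sym G v u HG), Horth in E.
  apply HN. nra.
Qed.

Lemma frame_P i k : sum2 (fun j => (u i * u j + v i * v j) * G j k) = if Bool.eqb i k then bil G u u else 0.
Proof.
  apply Rminus_diag_uniq. revert k.
  apply (frame0 u v (fun k => sum2 (fun j => (u i * u j + v i * v j) * G j k) - (if Bool.eqb i k then bil G u u else 0)) frame_m).
  - transitivity (u i * (bil G u u - bil G u u) + v i * bil G u v).
    + destruct i; unfold bil, sum2; simpl; rewrite HG; ring.
    + rewrite Horth; ring.
  - transitivity (u i * bil G u v + v i * (bil G v v - bil G u u)).
    + destruct i; unfold bil, sum2; simpl; rewrite HG; ring.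
    + rewrite Horth, Hnorm; ring.
Qed.

Lemma frame_hinv i j : hinv G i j = (u i * u j + v i * v j) / bil G u u.
Proof.
  pose proof frame_det as Hd.
  pose proof (frame_P i false) as P0. pose proof (frame_P i true) as P1.
  unfold sum2 in P0, P1. simpl in P0, P1.
  assert (Hd' : G false false * G true true - G false true * G true false <> 0) by exact Hd.
  destruct (lin2 _ _ _ _ _ _ _ _ P0 P1 Hd') as [A0 A1].
  unfold hinv. apply (Rmult_eq_reg_r (bil G u u)); [|exact HN].
  destruct i, j; simpl in *; [ rewrite A1 | rewrite A0 | rewrite A1 | rewrite A0 ];
  unfold detJ in *; field; auto.
Qed.
End Frame.

Lemma bil_exp1 T (u v C Y : bool -> R) N a b :
  (forall i, N * C i = a * u i + b * v i) -> N * bil T C Y = a * bil T u Y + b * bil T v Y.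
Proof.
  intros H. pose proof (H false) as e0. pose proof (H true) as e1.
  unfold bil, sum2.
  transitivity (T false false * (N * C false) * Y false + T false true * (N * C false) * Y true
   + (T true false * (N * C true) * Y false + T true true * (N * C true) * Y true)); [ring|].
  rewrite e0, e1; ring.
Qed.

Lemma bil_exp2 T (u v C Y : bool -> R) N a b :
  (forall i, N * C i = a * u i + b * v i) -> N * bil T Y C = a * bil T Y u + b * bil T Y v.
Proof.
  intros H. pose proof (H false) as e0. pose proof (H true) as e1.
  unfold bil, sum2.
  transitivity (T false false * Y false * (N * C false) + T false true * Y false * (N * C true)
   + (T true false * Y true * (N * C false) + T true true * Y true * (N * C true))); [ring|].
  rewrite e0, e1; ring.
Qed.

Lemma hinv_G G (C : bool -> R) i : detJ G <> 0 -> G true false = G false true ->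
  C i = sum2 (fun k => hinv G i k * sum2 (fun j => G k j * C j)).
Proof.
  intros Hd HG. unfold detJ in Hd. rewrite HG in Hd.
  destruct i; unfold hinv, detJ, sum2; simpl; rewrite HG; field; exact Hd.
Qed.

Section Jet.
Variables (G : bool -> bool -> R) (dG : bool -> bool -> bool -> R)
          (DD : bool -> bool -> R) (dDD : bool -> bool -> bool -> R)
          (u v : bool -> R) (du dv : bool -> bool -> R) (phi : R).
Hypothesis HG : G true false = G false true.
Hypothesis HdG : forall k, dG k true false = dG k false true.
Hypothesis HD : DD true false = DD false true.
Hypothesis HdD : forall k, dDD k true false = dDD k false true.
Hypothesis Horth : bil G u v = 0.
Hypothesis Hnorm : bil G v v = bil G u u.
Hypothesis HN : bil G u u <> 0.
Hypothesis Hdorth : forall k, dbil G dG u du v dv k = 0.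
Hypothesis Hdnorm : forall k, dbil G dG v dv v dv k = dbil G dG u du u du k.
Hypothesis Hckv : forall i j, lieJ u du G dG i j = phi * G i j.
Hypothesis Hkid : forall i j, lieJ u du DD dDD i j = 0.
Hypothesis Htr : sum2 (fun a => sum2 (fun b => hinv G a b * DD a b)) = 0.
Hypothesis Hdiv : forall b, divJ G dG DD dDD b = 0.
Hypothesis Hdtr : forall k, dbil DD dDD u du u du k + dbil DD dDD v dv v dv k = 0.

Let N := bil G u u.
Let Hm := frame_m G u v HG Horth Hnorm HN.
Let Hdet := frame_det G u v HG Horth Hnorm HN.
Let Hh := frame_hinv G u v HG Horth Hnorm HN.

Lemma brk_self X dX i : brk X dX X dX i = 0.
Proof. unfold brk, sum2. ring. Qed.

Lemma bil_zero1 T (w Y : bool -> R) : (forall i, w i = 0) -> bil T w Y = 0.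
Proof. intros H. unfold bil, sum2. rewrite !H. ring. Qed.
Lemma bil_zero2 T (w Y : bool -> R) : (forall i, w i = 0) -> bil T Y w = 0.
Proof. intros H. unfold bil, sum2. rewrite !H. ring. Qed.

Lemma Hw : forall i, brk u du v dv i = 0.
Proof.
  set (w := brk u du v dv).
  assert (E1 : bil G u w = 0).
  { pose proof (L1 u du u du v dv G dG) as L.
    assert (Z : dir u (dbil G dG u du v dv) = 0) by (unfold dir, sum2; rewrite !Hdorth; ring).
    assert (Z2 : bil (lieJ u du G dG) u v = phi * bil G u v) by (unfold bil, sum2; rewrite !Hckv; ring).
    rewrite Z, Z2, Horth, (bil_zero1 G _ v (brk_self u du)) in L. fold w in L. lra. }
  assert (E2 : bil G v w = 0).
  { pose proof (L1 u du v dv v dv G dG) as L. pose proof (L1 u du u du u du G dG) as L'.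
    assert (Z : dir u (dbil G dG v dv v dv) = dir u (dbil G dG u du u du)) by (unfold dir, sum2; rewrite !Hdnorm; ring).
    assert (Z2 : forall X Y, bil (lieJ u du G dG) X Y = phi * bil G X Y) by (intros; unfold bil, sum2; rewrite !Hckv; ring).
    rewrite Z, Z2 in L. rewrite Z2 in L'.
    rewrite (bil_zero1 G _ u (brk_self u du)), (bil_zero2 G _ u (brk_self u du)) in L'.
    rewrite Hnorm in L. fold w in L. rewrite (bil_sym G w v HG) in L. lra. }
  assert (Hc : forall i, sum2 (fun j => G i j * w j) = 0).
  { apply (frame0 u v _ Hm).
    - rewrite <- E1. unfold bil, sum2. ring.
    - rewrite <- E2. unfold bil, sum2. ring. }
  pose proof (Hc false) as c0. pose proof (Hc true) as c1. unfold sum2 in c0, c1.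
  assert (Hd' : G false false * G true true - G false true * G true false <> 0) by exact Hdet.
  intros i. apply (Rmult_eq_reg_r (G false false * G true true - G false true * G true false)); [|exact Hd'].
  rewrite Rmult_0_l.
  destruct i.
  - transitivity (G false false * (G true false * w false + G true true * w true) - G true false * (G false false * w false + G false true * w true)); [ring|].
    rewrite c0, c1; ring.
  - transitivity (G true true * (G false false * w false + G false true * w true) - G false true * (G true false * w false + G true true * w true)); [ring|].
    rewrite c0, c1; ring.
Qed.

Lemma Gu1 : dir u (dbil DD dDD u du u du) = 0.
Proof.
  rewrite L1 with (dX := du).
  rewrite (bil_zero1 DD _ u (brk_self u du)), (bil_zero2 DD _ u (brk_self u du)).
  assert (Z : bil (lieJ u du DD dDD) u u = 0) by (unfold bil, sum2; rewrite !Hkid; ring).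
  rewrite Z; ring.
Qed.

Lemma Gu2 : dir u (dbil DD dDD u du v dv) = 0.
Proof.
  rewrite L1 with (dX := du).
  rewrite (bil_zero1 DD _ v (brk_self u du)), (bil_zero2 DD _ u Hw).
  assert (Z : bil (lieJ u du DD dDD) u v = 0) by (unfold bil, sum2; rewrite !Hkid; ring).
  rewrite Z; ring.
Qed.

Lemma NABX_zero Y : NABX G dG DD dDD u u Y + NABX G dG DD dDD v v Y = 0.
Proof.
  assert (Z : bil G (divJ G dG DD dDD) Y = 0) by (unfold bil, sum2; rewrite !Hdiv; ring).
  rewrite div_contract in Z by assumption.
  apply (Rmult_eq_reg_r (/ N)); [| apply Rinv_neq_0_compat; exact HN].
  rewrite Rmult_0_l. rewrite <- Z.
  unfold NABX, sum2. rewrite !Hh. fold N. field. exact HN.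
Qed.

Lemma expand (C : bool -> R) i : N * C i = bil G C u * u i + bil G C v * v i.
Proof.
  rewrite (hinv_G G C i Hdet HG) at 1.
  unfold sum2. rewrite !Hh. fold N. unfold bil, sum2. rewrite HG. field. exact HN.
Qed.

Lemma trace_frame : bil DD v v = - bil DD u u.
Proof.
  assert (E : sum2 (fun a => sum2 (fun b => hinv G a b * DD a b)) = (bil DD u u + bil DD v v) / N).
  { unfold sum2. rewrite !Hh. fold N. unfold bil, sum2. field. exact HN. }
  rewrite Htr in E.
  assert (bil DD u u + bil DD v v = 0).
  { apply (Rmult_eq_reg_r (/ N)); [| apply Rinv_neq_0_compat; exact HN]. lra. }
  lra.
Qed.

Lemma main_jet : (forall k, dbil DD dDD u du u du k = 0) /\ (forall k, dbil DD dDD u du v dv k = 0).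
Proof.
  set (Cuu := cov G dG u u du). set (Cvv := cov G dG v v dv).
  set (Cvu := cov G dG v u du).
  assert (Ecomm : cov G dG u v dv = Cvu).
  { apply functional_extensionality; intro i. pose proof (torsion G dG u du v dv i HdG) as T.
    rewrite Hw in T. unfold Cvu. lra. }
  set (Nu := dir u (dbil G dG u du u du)). set (Nv := dir v (dbil G dG u du u du)).
  pose proof (fun X Y dY Z dZ => metric_compat G dG X Y dY Z dZ HG HdG Hdet) as MC.
  assert (bs : forall X Y, bil G X Y = bil G Y X) by (intros; apply bil_sym; exact HG).
  assert (A1 : bil G Cuu u = Nu / 2).
  { pose proof (MC u u du u du) as M. fold Cuu Nu in M. rewrite (bs u Cuu) in M. lra. }
  assert (A3 : bil G Cvu u = Nv / 2).
  { pose proof (MC v u du u du) as M. fold Cvu Nv in M. rewrite (bs u Cvu) in M. lra. }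
  assert (B3 : bil G Cvu v = Nu / 2).
  { pose proof (MC u v dv v dv) as M. rewrite Ecomm in M.
    assert (Z : dir u (dbil G dG v dv v dv) = Nu) by (unfold Nu, dir, sum2; rewrite !Hdnorm; ring).
    rewrite Z in M. rewrite (bs v Cvu) in M. lra. }
  assert (B2 : bil G Cvv v = Nv / 2).
  { pose proof (MC v v dv v dv) as M. fold Cvv in M.
    assert (Z : dir v (dbil G dG v dv v dv) = Nv) by (unfold Nv, dir, sum2; rewrite !Hdnorm; ring).
    rewrite Z in M. rewrite (bs v Cvv) in M. lra. }
  assert (B1 : bil G Cuu v = - (Nv / 2)).
  { pose proof (MC u u du v dv) as M. fold Cuu in M. rewrite Ecomm in M.
    assert (Z : dir u (dbil G dG u du v dv) = 0) by (unfold dir, sum2; rewrite !Hdorth; ring).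
    rewrite Z, (bs u Cvu), A3 in M. lra. }
  assert (A2 : bil G Cvv u = - (Nu / 2)).
  { pose proof (MC v u du v dv) as M. fold Cvv Cvu in M.
    assert (Z : dir v (dbil G dG u du v dv) = 0) by (unfold dir, sum2; rewrite !Hdorth; ring).
    rewrite Z, (bs u Cvv), B3 in M. lra. }
  assert (Dsym : bil DD v u = bil DD u v) by (apply bil_sym; exact HD).
  pose proof trace_frame as TF.
  assert (QU : dir u (dbil DD dDD u du u du) + dir v (dbil DD dDD v dv u du) = 0).
  { pose proof (NABX_zero u) as Z.
    rewrite (NABX_eq G dG DD dDD u du u du), (NABX_eq G dG DD dDD v dv u du) in Z.
    fold Cuu Cvv Cvu in Z.
    apply (Rmult_eq_reg_l N); [| exact HN]. rewrite Rmult_0_r.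
    transitivity (N * 0 + (N * bil DD Cuu u + N * bil DD u Cuu + N * bil DD Cvv u + N * bil DD v Cvu)).
    { rewrite <- Z. ring. }
    rewrite (bil_exp1 DD u v Cuu u N _ _ (expand Cuu)), (bil_exp2 DD u v Cuu u N _ _ (expand Cuu)),
      (bil_exp1 DD u v Cvv u N _ _ (expand Cvv)), (bil_exp2 DD u v Cvu v N _ _ (expand Cvu)).
    rewrite A1, A2, A3, B1, B2, B3, Dsym, TF. ring. }
  assert (QV : dir u (dbil DD dDD u du v dv) + dir v (dbil DD dDD v dv v dv) = 0).
  { pose proof (NABX_zero v) as Z.
    rewrite (NABX_eq G dG DD dDD u du v dv), (NABX_eq G dG DD dDD v dv v dv) in Z.
    fold Cuu Cvv in Z. rewrite Ecomm in Z.
    apply (Rmult_eq_reg_l N); [| exact HN]. rewrite Rmult_0_r.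
    transitivity (N * 0 + (N * bil DD Cuu v + N * bil DD u Cvu + N * bil DD Cvv v + N * bil DD v Cvv)).
    { rewrite <- Z. ring. }
    rewrite (bil_exp1 DD u v Cuu v N _ _ (expand Cuu)), (bil_exp2 DD u v Cvu u N _ _ (expand Cvu)),
      (bil_exp1 DD u v Cvv v N _ _ (expand Cvv)), (bil_exp2 DD u v Cvv v N _ _ (expand Cvv)).
    rewrite A1, A2, A3, B1, B2, B3, Dsym, TF. ring. }
  assert (dsym : forall k, dbil DD dDD v dv u du k = dbil DD dDD u du v dv k)
    by (intros k; unfold dbil, sum2; rewrite HD, HdD; ring).
  assert (V2 : dir v (dbil DD dDD u du v dv) = 0).
  { rewrite Gu1 in QU. rewrite <- QU. unfold dir, sum2. rewrite !dsym. ring. }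
  assert (V1 : dir v (dbil DD dDD u du u du) = 0).
  { rewrite Gu2 in QV.
    transitivity (- dir v (dbil DD dDD v dv v dv)); [|lra].
    unfold dir, sum2. pose proof (Hdtr false). pose proof (Hdtr true). nra. }
  split.
  - apply (frame0 u v _ Hm).
    + rewrite <- Gu1. unfold dir, sum2. ring.
    + rewrite <- V1. unfold dir, sum2. ring.
  - apply (frame0 u v _ Hm).
    + rewrite <- Gu2. unfold dir, sum2. ring.
    + rewrite <- V2. unfold dir, sum2. ring.
Qed.
End Jet.

Definition flatJ (G : bool -> bool -> R) (u : bool -> R) i := sum2 (fun j => G i j * u j).
Definition DxiJ G u i j := / (bil G u u ^ 2) * (flatJ G u i * flatJ G u j - / 2 * bil G u u * G i j).
Definition DxxJ G u v i j := / (2 * bil G u u * bil G v v) * (flatJ G u i * flatJ G v j + flatJ G v i * flatJ G u j).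

Lemma trace_frame' G DD u v : G true false = G false true -> bil G u v = 0 -> bil G v v = bil G u u -> bil G u u <> 0 ->
  sum2 (fun a => sum2 (fun b => hinv G a b * DD a b)) = 0 -> bil DD v v = - bil DD u u.
Proof.
  intros HG Horth Hnorm HN Htr.
  pose proof (frame_hinv G u v HG Horth Hnorm HN) as Hh.
  set (N := bil G u u) in *.
  assert (E : sum2 (fun a => sum2 (fun b => hinv G a b * DD a b)) = (bil DD u u + bil DD v v) / N).
  { unfold sum2. rewrite !Hh. unfold bil, sum2. field. exact HN. }
  rewrite Htr in E.
  assert (bil DD u u + bil DD v v = 0).
  { apply (Rmult_eq_reg_r (/ N)); [| apply Rinv_neq_0_compat; exact HN]. lra. }
  lra.
Qed.

Lemma final_alg G DD u v i j : G true false = G false true -> DD true false = DD false true ->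
  bil G u v = 0 -> bil G v v = bil G u u -> bil G u u <> 0 ->
  sum2 (fun a => sum2 (fun b => hinv G a b * DD a b)) = 0 ->
  DD i j = 2 * bil DD u u * DxiJ G u i j + 2 * bil DD u v * DxxJ G u v i j.
Proof.
  intros HG HD Horth Hnorm HN Htr.
  pose proof (trace_frame' G DD u v HG Horth Hnorm HN Htr) as TF.
  pose proof (frame_m G u v HG Horth Hnorm HN) as Hm.
  remember (bil DD u u) as F1 eqn:HF1. remember (bil DD u v) as F2 eqn:HF2. remember (bil G u u) as N eqn:HNd.
  set (E := fun i j => DD i j - (2 * F1 * DxiJ G u i j + 2 * F2 * DxxJ G u v i j)).
  assert (bE : forall X Y, bil E X Y = bil DD X Y - (2 * F1 / N^2 * (bil G X u * bil G Y u - / 2 * N * bil G X Y)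
            + F2 / N^2 * (bil G X u * bil G Y v + bil G X v * bil G Y u))).
  { intros X Y. unfold E, DxiJ, DxxJ, flatJ. rewrite Hnorm, <- HNd.
    unfold bil, sum2. rewrite HG. field. exact HN. }
  assert (Guv : bil G v u = 0) by (rewrite bil_sym; assumption).
  assert (e1 : bil E u u = 0).
  { rewrite bE, Horth. rewrite <- HF1. rewrite <- HNd. field. exact HN. }
  assert (e2 : bil E u v = 0).
  { rewrite bE, Horth, Guv, Hnorm. rewrite <- HF2, <- HNd. field. exact HN. }
  assert (e3 : bil E v u = 0).
  { rewrite bE, Horth, Guv, Hnorm. rewrite (bil_sym DD v u HD), <- HF2, <- HNd. field. exact HN. }
  assert (e4 : bil E v v = 0) by (rewrite bE, ?Horth, ?Guv, ?Hnorm, TF; rewrite <- ?HF1, <- ?HNd; field; exact HN).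
  assert (r : forall j, sum2 (fun i => E i j * u i) = 0).
  { apply (frame0 u v _ Hm).
    - rewrite <- e1. unfold bil, sum2. ring.
    - rewrite <- e2. unfold bil, sum2. ring. }
  assert (s : forall j, sum2 (fun i => E i j * v i) = 0).
  { apply (frame0 u v _ Hm).
    - rewrite <- e3. unfold bil, sum2. ring.
    - rewrite <- e4. unfold bil, sum2. ring. }
  assert (Ez : E i j = 0).
  { revert i. apply (frame0 u v (fun i => E i j) Hm); [apply r | apply s]. }
  unfold E in Ez. lra.
Qed.

Definition upd (k : bool) (q : pt) (t : R) : pt := if k then (fst q, t) else (t, snd q).
Definition crd (k : bool) (q : pt) : R := if k then snd q else fst q.
Definition dl k (f : pt -> R) q (l : R) := is_derive (fun t => f (upd k q t)) (crd k q) l.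

Lemma upd_crd k q : upd k q (crd k q) = q.
Proof. destruct k, q; reflexivity. Qed.

Lemma pd_eq k f q : pd k f q = Derive (fun t => f (upd k q t)) (crd k q).
Proof. destruct k; reflexivity. Qed.

Lemma dl_pd k f q l : dl k f q l -> pd k f q = l.
Proof. rewrite pd_eq. apply is_derive_unique. Qed.

Lemma dl_val k f q a b : dl k f q a -> a = b -> dl k f q b.
Proof. intros H ->; exact H. Qed.

Lemma dl_mult k f h q a b : dl k f q a -> dl k h q b -> dl k (fun x => f x * h x) q (a * h q + f q * b).
Proof.
  unfold dl. intros Ha Hb.
  pose proof (is_derive_mult _ _ _ _ _ Ha Hb (fun n m => Rmult_comm n m)) as H.
  cbv beta in H. rewrite upd_crd in H. exact H.
Qed.

Lemma dl_plus k f h q a b : dl k f q a -> dl k h q b -> dl k (fun x => f x + h x) q (a + b).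
Proof. unfold dl. intros Ha Hb. exact (is_derive_plus _ _ _ _ _ Ha Hb). Qed.

Lemma dl_minus k f h q a b : dl k f q a -> dl k h q b -> dl k (fun x => f x - h x) q (a - b).
Proof. unfold dl. intros Ha Hb. exact (is_derive_minus _ _ _ _ _ Ha Hb). Qed.

Lemma dl_opp k f q a : dl k f q a -> dl k (fun x => - f x) q (- a).
Proof. unfold dl. intros Ha. exact (is_derive_opp _ _ _ Ha). Qed.

Lemma dl_div k f h q a b : dl k f q a -> dl k h q b -> h q <> 0 ->
  dl k (fun x => f x / h x) q ((a * h q - f q * b) / (h q)^2).
Proof.
  unfold dl. intros Ha Hb Hh.
  rewrite <- (upd_crd k q) in Hh.
  pose proof (is_derive_div _ _ _ _ _ Ha Hb Hh) as H.
  cbv beta in H. rewrite upd_crd in H. exact H.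
Qed.

Lemma dl_sum2 k (F : bool -> pt -> R) q (dF : bool -> R) :
  (forall i, dl k (F i) q (dF i)) -> dl k (fun x => sum2 (fun i => F i x)) q (sum2 dF).
Proof. intros H. unfold sum2. apply dl_plus; apply H. Qed.

Lemma dl_smooth U f k q : smooth_on U f -> U q -> dl k f q (pd k f q).
Proof.
  intros Hs Hq. destruct (Hs nil q Hq) as [_ [H1 H2]].
  rewrite pd_eq. unfold dl. destruct k; simpl in *; apply Derive_correct; assumption.
Qed.

Lemma ball_pt (q x : pt) (e : R) : ball q e x <-> Rabs (fst x - fst q) < e /\ Rabs (snd x - snd q) < e.
Proof.
  destruct q, x. unfold ball. simpl. unfold prod_ball. simpl. unfold ball. simpl.
  unfold AbsRing_ball, abs, minus, plus, opp. simpl. tauto.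
Qed.

Lemma upd_ball k q (e : R) t : Rabs (t - crd k q) < e -> 0 < e -> ball q e (upd k q t).
Proof.
  intros Ht He. apply ball_pt. destruct k, q; simpl in *; unfold Rminus; rewrite ?Rplus_opp_r, ?Rabs_R0; auto.
Qed.

Lemma pd_ext_loc (U : pt -> Prop) f h k q : open U -> U q -> (forall x, U x -> f x = h x) -> pd k f q = pd k h q.
Proof.
  intros HU Hq Hfh. rewrite !pd_eq. apply Derive_ext_loc.
  destruct (HU q Hq) as [e He]. exists e. intros t Ht. apply Hfh, He.
  apply upd_ball; [| apply cond_pos]. exact Ht.
Qed.

Lemma dl_vanish (U : pt -> Prop) f k q l : open U -> U q -> (forall x, U x -> f x = 0) -> dl k f q l -> l = 0.
Proof.
  intros HU Hq Hf Hd. rewrite <- (dl_pd _ _ _ _ Hd).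
  rewrite (pd_ext_loc U f (fun _ => 0) k q HU Hq Hf). rewrite pd_eq. apply Derive_const.
Qed.

Lemma dl_bil k q (T : bool -> bool -> pt -> R) (X Y : bool -> pt -> R) (dT : bool -> bool -> R) (dX dY : bool -> R) :
  (forall i j, dl k (T i j) q (dT i j)) -> (forall i, dl k (X i) q (dX i)) -> (forall i, dl k (Y i) q (dY i)) ->
  dl k (fun x => sum2 (fun i => sum2 (fun j => T i j x * X i x * Y j x))) q
     (sum2 (fun i => sum2 (fun j => dT i j * X i q * Y j q + T i j q * dX i * Y j q + T i j q * X i q * dY j))).
Proof.
  intros HT HX HY. apply dl_sum2. intro i. apply dl_sum2. intro j.
  eapply dl_val. { apply dl_mult; [apply dl_mult|]; [apply HT | apply HX | apply HY]. }
  cbv beta. ring.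
Qed.

Definition Gq (g : cov2) (q : pt) := fun a b => g a b q.
Definition dGq (g : cov2) (q : pt) := fun k a b => pd k (g a b) q.

Lemma dl_ginv U g k q i j : (forall a b, smooth_on U (g a b)) -> U q -> gdet g q <> 0 ->
  g true false q = g false true q -> (forall k, pd k (g true false) q = pd k (g false true) q) ->
  dl k (ginv g i j) q (dhinv (Gq g q) (dGq g q) k i j).
Proof.
  intros Hs Hq Hd HG HdG.
  assert (Hnum : dl k (fun x => if Bool.eqb i j then g (negb i) (negb j) x else - g i j x) q
                   (if Bool.eqb i j then pd k (g (negb i) (negb j)) q else - pd k (g i j) q)).
  { destruct i, j; simpl; try apply dl_opp; apply (dl_smooth U); auto. }
  assert (Hdet : dl k (gdet g) q (pd k (g false false) q * g true true q + g false false q * pd k (g true true) q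
                    - (pd k (g false true) q * g true false q + g false true q * pd k (g true false) q))).
  { unfold gdet. apply dl_minus; apply dl_mult; apply (dl_smooth U); auto. }
  eapply dl_val. { exact (dl_div k _ _ q _ _ Hnum Hdet Hd). }
  unfold gdet in Hd. rewrite HG in Hd.
  pose proof (HdG k) as Hk.
  destruct i, j; unfold dhinv, hinv, detJ, Gq, dGq, gdet, sum2; simpl; rewrite ?HG, ?Hk; field; exact Hd.
Qed.

Lemma dl_raise2 U g D k q a b : (forall a b, smooth_on U (g a b)) -> (forall a b, smooth_on U (D a b)) -> U q -> gdet g q <> 0 ->
  g true false q = g false true q -> (forall k, pd k (g true false) q = pd k (g false true) q) ->
  dl k (raise2 g D a b) q (dR2 (Gq g q) (dGq g q) (Gq D q) (dGq D q) k a b).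
Proof.
  intros Hs HsD Hq Hd HG HdG. unfold raise2.
  apply dl_sum2. intro c. apply dl_sum2. intro d.
  eapply dl_val.
  { apply dl_mult; [apply dl_mult|].
    - apply (dl_ginv U); auto.
    - apply (dl_ginv U); auto.
    - apply (dl_smooth U); auto. }
  unfold Gq, dGq. unfold ginv, hinv, gdet, detJ. cbv beta. ring.
Qed.

Lemma divD_eq U g D b q : (forall a b, smooth_on U (g a b)) -> (forall a b, smooth_on U (D a b)) -> U q -> gdet g q <> 0 ->
  g true false q = g false true q -> (forall k, pd k (g true false) q = pd k (g false true) q) ->
  divD g D b q = divJ (Gq g q) (dGq g q) (Gq D q) (dGq D q) b.
Proof.
  intros. unfold divD, divJ, sum2.
  rewrite (dl_pd _ _ _ _ (dl_raise2 U g D false q false b H H0 H1 H2 H3 H4)).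
  rewrite (dl_pd _ _ _ _ (dl_raise2 U g D true q true b H H0 H1 H2 H3 H4)).
  reflexivity.
Qed.

Lemma const1 (f : R -> R) c e a b : (forall t, Rabs (t - c) < e -> is_derive f t 0) ->
  Rabs (a - c) < e -> Rabs (b - c) < e -> f a = f b.
Proof.
  intros Hd Ha Hb.
  assert (Hin : forall x, Rmin a b <= x <= Rmax a b -> Rabs (x - c) < e).
  { intros x [H1 H2]. apply Rabs_lt_between' in Ha. apply Rabs_lt_between' in Hb. apply Rabs_lt_between'.
    unfold Rmin, Rmax in *. destruct (Rle_dec a b); lra. }
  destruct (MVT_gen f a b (fun _ => 0)) as [x [_ Hx]].
  - intros x [H1 H2]. apply Hd, Hin. lra.
  - intros x Hx. apply continuity_pt_filterlim. apply (ex_derive_continuous f).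
    exists 0. apply Hd, Hin; exact Hx.
  - rewrite Rmult_0_l in Hx. lra.
Qed.

Lemma const_ball (F : pt -> R) (p : pt) (e : R) :
  (forall q, ball p e q -> forall k, dl k F q 0) -> forall q, ball p e q -> F q = F p.
Proof.
  intros H q Hq. destruct p as [p1 p2], q as [q1 q2].
  destruct (proj1 (ball_pt _ _ _) Hq) as [H1 H2]; simpl in H1, H2.
  assert (He : 0 < e) by (pose proof (Rabs_pos (q1 - p1)); lra).
  assert (H0 : forall z, Rabs (z - z) < e) by (intro z; unfold Rminus; rewrite Rplus_opp_r, Rabs_R0; exact He).
  transitivity (F (q1, p2)).
  - apply (const1 (fun s => F (q1, s)) p2 e); [| exact H2 | apply H0].
    intros t Ht. assert (B : ball (p1, p2) e (q1, t)) by (apply (proj2 (ball_pt _ _ _)); simpl; auto).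
    exact (H _ B true).
  - apply (const1 (fun s => F (s, p2)) p1 e); [| exact H1 | apply H0].
    intros t Ht. assert (B : ball (p1, p2) e (t, p2)) by (apply (proj2 (ball_pt _ _ _)); simpl; auto).
    exact (H _ B false).
Qed.

Lemma open_ball_pt (p : pt) (e : R) : open_pt (ball p e).
Proof.
  unfold open_pt, open. intros x Hx. destruct p as [p1 p2]. destruct x as [x1 x2].
  destruct (proj1 (ball_pt _ _ _) Hx) as [h1 h2]. simpl in h1, h2.
  assert (dpos : 0 < Rmin (e - Rabs (x1 - p1)) (e - Rabs (x2 - p2))) by (apply Rmin_glb_lt; lra).
  exists (mkposreal _ dpos). intros [y1 y2] Hy.
  destruct (proj1 (ball_pt _ _ _) Hy) as [k1 k2]. simpl in k1, k2.
  apply (proj2 (ball_pt _ _ _)). simpl.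
  pose proof (Rmin_l (e - Rabs (x1 - p1)) (e - Rabs (x2 - p2))) as m1.
  pose proof (Rmin_r (e - Rabs (x1 - p1)) (e - Rabs (x2 - p2))) as m2.
  pose proof (Rabs_triang (y1 - x1) (x1 - p1)) as t1.
  pose proof (Rabs_triang (y2 - x2) (x2 - p2)) as t2.
  replace (y1 - x1 + (x1 - p1)) with (y1 - p1) in t1 by ring.
  replace (y2 - x2 + (x2 - p2)) with (y2 - p2) in t2 by ring.
  split; lra.
Qed.

Lemma cplus (f h : pt -> R) q : continuous f q -> continuous h q -> continuous (fun x => f x + h x) q.
Proof. intros; exact (continuous_plus f h q H H0). Qed.
Lemma cmult (f h : pt -> R) q : continuous f q -> continuous h q -> continuous (fun x => f x * h x) q.
Proof. intros; exact (continuous_mult f h q H H0). Qed.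

Lemma cont_bil (T : bool -> bool -> pt -> R) (X Y : bool -> pt -> R) q :
  (forall i j, continuous (T i j) q) -> (forall i, continuous (X i) q) -> (forall i, continuous (Y i) q) ->
  continuous (fun x => sum2 (fun i => sum2 (fun j => T i j x * X i x * Y j x))) q.
Proof.
  intros HT HX HY. unfold sum2.
  repeat apply cplus; repeat apply cmult; auto.
Qed.

Lemma smooth_cont (U : pt -> Prop) f p : smooth_on U f -> U p -> continuous f p.
Proof. intros Hs Hp. exact (proj1 (Hs nil p Hp)). Qed.

Theorem theorem9p2 (U : pt -> Prop) (g : cov2) (xi xp : vfield) (D : cov2) :
  open_pt U ->
  riemannian_on U g ->
  conformal_killing_on U g xi ->
  (* xi^perp: conformal Killing, orthogonal to xi, same norm as xi *)
  conformal_killing_on U g xp ->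
  (forall p, U p -> gdot g xi xp p = 0) ->
  (forall p, U p -> gnorm2 g xp p = gnorm2 g xi p) ->
  (* D: smooth, symmetric, transverse-traceless, KID equation *)
  (forall i j, smooth_on U (D i j)) ->
  (forall i j p, U p -> D i j p = D j i p) ->
  transverse_traceless_on U g D ->
  (forall p, U p -> forall i j, lie2 xi D i j p = 0) ->
  forall p, U p -> gnorm2 g xi p <> 0 ->
    exists V : pt -> Prop, open_pt V /\ V p /\
      (forall q, V q -> U q /\ gnorm2 g xi q <> 0) /\
      exists a b : R, forall q, V q -> forall i j,
        D i j q = a * D_xi g xi i j q + b * D_xi_xiperp g xi xp i j q.
Proof.
  intros HU Hriem Hckx Hckp Horth Hnorm HsD HDsym Htt Hkid p Hp HNp.
  destruct Hriem as [Hsg [Hgsym _]].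
  destruct Hckx as [Hsx [phi Hphi]]. destruct Hckp as [Hsp _].
  assert (Hc : continuous (gnorm2 g xi) p).
  { change (continuous (fun x => sum2 (fun i => sum2 (fun j => g i j x * xi i x * xi j x))) p).
    apply cont_bil; intros; eapply smooth_cont; eauto. }
  assert (Hloc : locally p (fun x => U x /\ gnorm2 g xi x <> 0)).
  { apply filter_and. { apply HU, Hp. }
    assert (H0 : locally (gnorm2 g xi p) (fun y => y <> 0)).
    { exists (mkposreal _ (Rabs_pos_lt _ HNp)). intros y Hy.
      change (Rabs (y - gnorm2 g xi p) < Rabs (gnorm2 g xi p)) in Hy.
      intro Hy0. rewrite Hy0, Rminus_0_l, Rabs_Ropp in Hy. lra. }
    exact (Hc _ H0). }
  destruct Hloc as [e He].
  exists (ball p e). split; [apply open_ball_pt|]. split; [apply ball_center|]. split; [exact He|].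
  exists (2 * gdot D xi xi p), (2 * gdot D xi xp p).
  assert (Hdl : forall (T : cov2) (X Y : vfield) q k, U q -> (forall i j, smooth_on U (T i j)) ->
     (forall i, smooth_on U (X i)) -> (forall i, smooth_on U (Y i)) ->
     dl k (gdot T X Y) q (dbil (Gq T q) (dGq T q) (fun i => X i q) (fun k i => pd k (X i) q)
                                (fun i => Y i q) (fun k i => pd k (Y i) q) k)).
  { intros T X Y q k Hq HT HX HY.
    exact (dl_bil k q T X Y (fun i j => pd k (T i j) q) (fun i => pd k (X i) q) (fun i => pd k (Y i) q)
      (fun i j => dl_smooth U _ k q (HT i j) Hq) (fun i => dl_smooth U _ k q (HX i) Hq)
      (fun i => dl_smooth U _ k q (HY i) Hq)). }
  assert (Hframe : forall q, ball p e q ->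
     Gq g q true false = Gq g q false true /\ Gq D q true false = Gq D q false true /\
     bil (Gq g q) (fun i => xi i q) (fun i => xp i q) = 0 /\
     bil (Gq g q) (fun i => xp i q) (fun i => xp i q) = bil (Gq g q) (fun i => xi i q) (fun i => xi i q) /\
     bil (Gq g q) (fun i => xi i q) (fun i => xi i q) <> 0 /\
     sum2 (fun a => sum2 (fun b => hinv (Gq g q) a b * Gq D q a b)) = 0).
  { intros q Hq. destruct (He q Hq) as [HUq HNq].
    split; [apply Hgsym; exact HUq|]. split; [apply HDsym; exact HUq|].
    split; [exact (Horth q HUq)|]. split; [exact (Hnorm q HUq)|]. split; [exact HNq|].
    exact (proj2 (Htt q HUq)). }
  assert (Hjet : forall q, ball p e q -> (forall k, dl k (gdot D xi xi) q 0) /\ (forall k, dl k (gdot D xi xp) q 0)).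
  { intros q Hq. destruct (He q Hq) as [HUq HNq].
    destruct (Hframe q Hq) as [HG [HD [Ho [Hn [HN Htr]]]]].
    assert (HdG : forall k, dGq g q k true false = dGq g q k false true).
    { intro k. unfold dGq. apply (pd_ext_loc U); auto. }
    assert (HdD : forall k, dGq D q k true false = dGq D q k false true).
    { intro k. unfold dGq. apply (pd_ext_loc U); auto. }
    assert (Hdorth : forall k, dbil (Gq g q) (dGq g q) (fun i => xi i q) (fun k i => pd k (xi i) q)
                                (fun i => xp i q) (fun k i => pd k (xp i) q) k = 0).
    { intro k. exact (dl_vanish U _ k q _ HU HUq Horth (Hdl g xi xp q k HUq Hsg Hsx Hsp)). }
    assert (Hdnorm : forall k, dbil (Gq g q) (dGq g q) (fun i => xp i q) (fun k i => pd k (xp i) q)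
                                (fun i => xp i q) (fun k i => pd k (xp i) q) k =
                               dbil (Gq g q) (dGq g q) (fun i => xi i q) (fun k i => pd k (xi i) q)
                                (fun i => xi i q) (fun k i => pd k (xi i) q) k).
    { intro k.
      pose proof (dl_vanish U (fun x => gnorm2 g xp x - gnorm2 g xi x) k q _ HU HUq
        (fun x Hx => ltac:(cbv beta; rewrite (Hnorm x Hx); ring))
        (dl_minus _ _ _ _ _ _ (Hdl g xp xp q k HUq Hsg Hsp Hsp) (Hdl g xi xi q k HUq Hsg Hsx Hsx))) as Z.
      lra. }
    assert (Hdtr : forall k, dbil (Gq D q) (dGq D q) (fun i => xi i q) (fun k i => pd k (xi i) q)
                                (fun i => xi i q) (fun k i => pd k (xi i) q) k +
                             dbil (Gq D q) (dGq D q) (fun i => xp i q) (fun k i => pd k (xp i) q)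
                                (fun i => xp i q) (fun k i => pd k (xp i) q) k = 0).
    { intro k.
      refine (dl_vanish (ball p e) (fun x => gdot D xi xi x + gdot D xp xp x) k q _ (open_ball_pt p e) Hq _
        (dl_plus _ _ _ _ _ _ (Hdl D xi xi q k HUq HsD Hsx Hsx) (Hdl D xp xp q k HUq HsD Hsp Hsp))).
      intros x Hx. destruct (Hframe x Hx) as [HGx [_ [Hox [Hnx [HNx Htrx]]]]].
      pose proof (trace_frame' (Gq g x) (Gq D x) (fun i => xi i x) (fun i => xp i x) HGx Hox Hnx HNx Htrx) as T.
      change (bil (Gq D x) (fun i => xi i x) (fun i => xi i x) + bil (Gq D x) (fun i => xp i x) (fun i => xp i x) = 0).
      lra. }
    assert (Hdet : gdet g q <> 0) by exact (frame_det _ _ _ HG Ho Hn HN).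
    assert (Hdiv : forall b, divJ (Gq g q) (dGq g q) (Gq D q) (dGq D q) b = 0).
    { intro b. rewrite <- (divD_eq U g D b q Hsg HsD HUq Hdet HG HdG). exact (proj1 (Htt q HUq) b). }
    destruct (main_jet (Gq g q) (dGq g q) (Gq D q) (dGq D q) (fun i => xi i q) (fun i => xp i q)
       (fun k i => pd k (xi i) q) (fun k i => pd k (xp i) q) (phi q) HG HdG HD HdD Ho Hn HN Hdorth Hdnorm
       (Hphi q HUq) (Hkid q HUq) Htr Hdiv Hdtr) as [R1 R2].
    split; intro k; eapply dl_val.
    - exact (Hdl D xi xi q k HUq HsD Hsx Hsx).
    - apply R1.
    - exact (Hdl D xi xp q k HUq HsD Hsx Hsp).
    - apply R2. }
  assert (C1 : forall q, ball p e q -> gdot D xi xi q = gdot D xi xi p)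
    by (apply const_ball; intros q Hq; exact (proj1 (Hjet q Hq))).
  assert (C2 : forall q, ball p e q -> gdot D xi xp q = gdot D xi xp p)
    by (apply const_ball; intros q Hq; exact (proj2 (Hjet q Hq))).
  intros q Hq i j. rewrite <- (C1 q Hq), <- (C2 q Hq).
  destruct (Hframe q Hq) as [HG [HD [Ho [Hn [HN Htr]]]]].
  exact (final_alg (Gq g q) (Gq D q) (fun i => xi i q) (fun i => xp i q) i j HG HD Ho Hn HN Htr).
Qed.
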